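(* Let $\mathbf{P}$ be a finite poset with a metric $d_{\mathbf{P}}$, and let $M,N$ be $\mathbf{P}$-modules. If $d_{\mathrm{GT}}(M,N)=0$, then $M\cong N$. Consequently $d_{\mathrm{GT}}$ is an extended metric on isomorphism classes of $\mathbf{P}$-modules.
   Context: Fix a field $k$; $\mathrm{vect}$ is the category of finite-dimensional $k$-vector spaces. A finite poset is a category with a unique morphism $x\to y$ iff $x\le y$; a $\mathbf{P}$-module is a functor $\mathbf{P}\to\mathrm{vect}$. For a monotone map $g$, $g^*$ denotes precomposition with $g$. A Galois insertion $f:\mathbf{Q}\rightleftarrows\mathbf{P}:g$ consists of monotone maps $f:\mathbf{Q}\to\mathbf{P}$, $g:\mathbf{P}\to\mathbf{Q}$ with $f(u)\le x\iff u\le g(x)$ for all $u,x$, and $f\circ g=\mathrm{id}_{\mathbf{P}}$. A Galois coupling of $(M,N)$ is a tuple $(\mathbf{Q},f\dashv g,h\dashv i,\Gamma)$ with $\mathbf{Q}$ a finite poset, $f:\mathbf{Q}\rightleftarrows\mathbf{P}:g$ and $h:\mathbf{Q}\rightleftarrows\mathbf{P}:i$ Galois insertions, and $\Gamma\in\mathrm{vect}^{\mathbf{Q}}$ with $g^*\Gamma\cong M$ and $i^*\Gamma\cong N$. Its cost is $\sup_{q\in\mathbf{Q}}d_{\mathbf{P}}(f(q),h(q))$. $d_{\mathrm{GT}}(M,N)$ is the infimum of costs of all Galois couplings of $(M,N)$, and $\infty$ if there is none. *)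

(* Defs.v *)
From HB Require Import structures.
From mathcomp Require Import all_boot all_order all_algebra.
From mathcomp Require Import classical_sets reals constructive_ereal ereal.
Set Implicit Arguments. Unset Strict Implicit. Unset Printing Implicit Defensive.
Import Order.TTheory GRing.Theory Num.Theory.
Local Open Scope ring_scope.
Local Open Scope order_scope.

Definition is_metric (R : realType) (T : Type) (dist : T -> T -> R) : Prop :=
  [/\ forall x y, 0 <= dist x y,
      forall x y, dist x y = 0 <-> x = y,
      forall x y, dist x y = dist y x &
      forall x y z, dist x z <= dist x y + dist y z].

(* A module over the poset Q: a functor Q -> vect, where each vector space is
   k^(pdim x) (row vectors) and the map for x <= y is the matrix pmap x y acting
   on row vectors by right multiplication.  pmap x y for x not <= y is unused. *)
Record pmod (k : fieldType) (d : Order.disp_t) (Q : porderType d) := PMod {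
  pdim : Q -> nat;
  pmap : forall x y : Q, 'M[k]_(pdim x, pdim y);
  pmap_id : forall x, pmap x x = 1%:M;
  pmap_comp : forall x y z, x <= y -> y <= z -> pmap x z = pmap x y *m pmap y z
}.

Definition diag_iso (k : fieldType) (d : Order.disp_t) (Q : porderType d)
  (dA : Q -> nat) (fA : forall x y, 'M[k]_(dA x, dA y))
  (dB : Q -> nat) (fB : forall x y, 'M[k]_(dB x, dB y)) : Prop :=
  exists (phi : forall x, 'M[k]_(dA x, dB x)) (psi : forall x, 'M[k]_(dB x, dA x)),
    [/\ forall x, phi x *m psi x = 1%:M,
        forall x, psi x *m phi x = 1%:M &
        forall x y, x <= y -> fA x y *m phi y = phi x *m fB x y].

Definition pmod_iso (k : fieldType) (d : Order.disp_t) (Q : porderType d)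
  (M N : pmod k Q) : Prop := diag_iso (@pmap _ _ _ M) (@pmap _ _ _ N).

Definition pullback_iso (k : fieldType) (d dQ : Order.disp_t) (P : porderType d)
  (Q : porderType dQ) (g : P -> Q) (G : pmod k Q) (M : pmod k P) : Prop :=
  @diag_iso k d P (fun x => pdim G (g x)) (fun x y => pmap G (g x) (g y))
            (pdim M) (pmap M).

Definition galois_insertion (d dQ : Order.disp_t) (P : porderType d)
  (Q : porderType dQ) (f : Q -> P) (g : P -> Q) : Prop :=
  [/\ {homo f : u v / u <= v}, {homo g : x y / x <= y},
      forall u x, (f u <= x) <-> (u <= g x) &
      forall x, f (g x) = x].

(* Cost of a coupling: sup_q d(f q, h q); over a finite (possibly empty) Q,
   with the convention that the empty sup of nonnegative reals is 0. *)
Definition coupling_cost (R : realType) (d dQ : Order.disp_t) (P : porderType d)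
  (Q : finPOrderType dQ) (dP : P -> P -> R) (f h : Q -> P) : R :=
  (\big[Num.max/0]_(q : Q) dP (f q) (h q))%R.

Definition coupling_cost_of (R : realType) (k : fieldType) (d : Order.disp_t)
  (P : finPOrderType d) (dP : P -> P -> R) (M N : pmod k P) (c : R) : Prop :=
  exists (dQ : Order.disp_t) (Q : finPOrderType dQ)
         (f : Q -> P) (g : P -> Q) (h : Q -> P) (i : P -> Q) (G : pmod k Q),
    [/\ galois_insertion f g, galois_insertion h i,
        pullback_iso g G M, pullback_iso i G N &
        c = coupling_cost dP f h].

(* d_GT(M,N): infimum of costs (+oo if there is no coupling). *)
Definition dGT (R : realType) (k : fieldType) (d : Order.disp_t)
  (P : finPOrderType d) (dP : P -> P -> R) (M N : pmod k P) : \bar R :=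
  ereal_inf [set (c%:E)%E | c in coupling_cost_of dP M N].

Definition ext_metric_on_iso_classes (R : realType) (k : fieldType)
  (d : Order.disp_t) (P : porderType d) (D : pmod k P -> pmod k P -> \bar R) : Prop :=
  [/\ (forall M M' N N', pmod_iso M M' -> pmod_iso N N' -> D M N = D M' N'),
      (forall M N, (0 <= D M N)%E),
      (forall M N, D M N = 0%E <-> pmod_iso M N),
      (forall M N, D M N = D N M) &
      (forall M N L, (D M L <= D M N + D N L)%E)].

(* Main.v *)
Require Import Defs.
From HB Require Import structures.
From mathcomp Require Import all_boot all_order all_algebra.
From mathcomp Require Import boolp classical_sets reals constructive_ereal ereal.
Require Import Defs.
Set Implicit Arguments. Unset Strict Implicit. Unset Printing Implicit Defensive.
Import Order.TTheory GRing.Theory Num.Theory.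
Local Open Scope ring_scope.
Local Open Scope order_scope.
Fact cq_display : Order.disp_t. Proof. exact: Order.Disp tt tt. Qed.

Section CQdef.
Context (d1 d2 : Order.disp_t) (Q1 : finPOrderType d1) (Q2 : finPOrderType d2)
  (pr : pred (Q1 * Q2)).
Definition CQ := {p : Q1 * Q2 | pr p}.
HB.instance Definition _ := Finite.on CQ.
Definition cqle (p q : CQ) := ((val p).1 <= (val q).1) && ((val p).2 <= (val q).2).
Lemma cqle_refl : reflexive cqle.
Proof. by move=> p; rewrite /cqle !lexx. Qed.
Lemma cqle_anti : antisymmetric cqle.
Proof.
move=> [[a b] ?] [[a' b'] ?]; rewrite /cqle /= => /andP[/andP[h1 h2] /andP[h3 h4]].
apply: val_inj => /=.
by rewrite (@le_anti _ _ a a') ?h1 ?h3 // (@le_anti _ _ b b') ?h2 ?h4.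
Qed.
Lemma cqle_trans : transitive cqle.
Proof.
move=> q p r; rewrite /cqle => /andP[h1 h2] /andP[h3 h4].
by rewrite (le_trans h1 h3) (le_trans h2 h4).
Qed.
HB.instance Definition _ := Order.Le_isPOrder.Build cq_display CQ cqle_refl cqle_anti cqle_trans.
Lemma cqleE (p q : CQ) : (p <= q) = ((val p).1 <= (val q).1) && ((val p).2 <= (val q).2).
Proof. by []. Qed.
End CQdef.

Lemma nat_inv (k : fieldType) (m n m' n' : nat) (phx : 'M[k]_(m, n)) (psx : 'M_(n, m))
  (phy : 'M[k]_(m', n')) (psy : 'M_(n', m')) (fA : 'M_(m, m')) (fB : 'M_(n, n')) :
  psx *m phx = 1%:M -> phy *m psy = 1%:M -> fA *m phy = phx *m fB ->
  fB *m psy = psx *m fA.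
Proof.
move=> e1 e2 e3.
by rewrite -[fB]mul1mx -e1 -(mulmxA psx phx fB) -e3 -!mulmxA e2 mulmx1.
Qed.

Section Iso.
Context (k : fieldType) (d : Order.disp_t) (Q : porderType d).

Lemma diag_iso_refl (dA : Q -> nat) (fA : forall x y, 'M[k]_(dA x, dA y)) :
  diag_iso fA fA.
Proof.
exists (fun x => 1%:M), (fun x => 1%:M); split => [x|x|x y _]; by rewrite ?mul1mx ?mulmx1.
Qed.

Lemma diag_iso_sym (dA : Q -> nat) (fA : forall x y, 'M[k]_(dA x, dA y))
  (dB : Q -> nat) (fB : forall x y, 'M[k]_(dB x, dB y)) :
  diag_iso fA fB -> diag_iso fB fA.
Proof.
move=> [phi [psi [e1 e2 e3]]]; exists psi, phi; split => // x y lxy.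
exact: nat_inv (e2 x) (e1 y) (e3 x y lxy).
Qed.

Lemma diag_iso_trans (dA : Q -> nat) (fA : forall x y, 'M[k]_(dA x, dA y))
  (dB : Q -> nat) (fB : forall x y, 'M[k]_(dB x, dB y))
  (dC : Q -> nat) (fC : forall x y, 'M[k]_(dC x, dC y)) :
  diag_iso fA fB -> diag_iso fB fC -> diag_iso fA fC.
Proof.
move=> [phi [psi [e1 e2 e3]]] [phi' [psi' [e1' e2' e3']]].
exists (fun x => phi x *m phi' x), (fun x => psi' x *m psi x); split => [x|x|x y lxy].
- by rewrite mulmxA -(mulmxA (phi x)) e1' mulmx1 e1.
- by rewrite mulmxA -(mulmxA (psi' x)) e2 mulmx1 e2'.
- by rewrite mulmxA e3 // -mulmxA e3' // mulmxA.
Qed.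
End Iso.

Section GI.
Context (d dQ : Order.disp_t) (P : porderType d) (Q : porderType dQ)
  (f : Q -> P) (g : P -> Q).

Lemma GI_build : (forall u x, (f u <= x) <-> (u <= g x)) -> (forall x, f (g x) = x) ->
  galois_insertion f g.
Proof.
move=> adj fg; split => //.
- move=> u v luv; apply/adj; apply: le_trans luv _; exact/adj.
- move=> x y lxy; apply/adj; rewrite fg //.
Qed.

Hypothesis H : galois_insertion f g.
Lemma GI_adj u x : (f u <= x) = (u <= g x).
Proof. by case: H => _ _ a _; apply/idP/idP => /a. Qed.
Lemma GI_fg x : f (g x) = x. Proof. by case: H. Qed.
Lemma GI_unit u : u <= g (f u). Proof. by rewrite -GI_adj. Qed.
Lemma GI_fmono u v : u <= v -> f u <= f v. Proof. by case: H => a _ _ _; apply: a. Qed.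
Lemma GI_gmono x y : x <= y -> g x <= g y. Proof. by case: H => _ a _ _; apply: a. Qed.
Lemma GI_gle x y : (g x <= g y) = (x <= y).
Proof. by rewrite -GI_adj GI_fg. Qed.
End GI.

Section Comp.
Context (k : fieldType) (d : Order.disp_t) (P : finPOrderType d)
  (d1 d2 : Order.disp_t) (Q1 : finPOrderType d1) (Q2 : finPOrderType d2).
Variables (f1 h1 : Q1 -> P) (g1 i1 : P -> Q1) (f2 h2 : Q2 -> P) (g2 i2 : P -> Q2).
Hypotheses (Hf1 : galois_insertion f1 g1) (Hh1 : galois_insertion h1 i1)
  (Hf2 : galois_insertion f2 g2) (Hh2 : galois_insertion h2 i2).
Variables (G1 : pmod k Q1) (G2 : pmod k Q2) (N : pmod k P).
Variables (phA : forall x, 'M[k]_(pdim G1 (i1 x), pdim N x))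
  (psA : forall x, 'M[k]_(pdim N x, pdim G1 (i1 x)))
  (phB : forall x, 'M[k]_(pdim G2 (g2 x), pdim N x))
  (psB : forall x, 'M[k]_(pdim N x, pdim G2 (g2 x))).
Hypotheses (eA1 : forall x, phA x *m psA x = 1%:M) (eA2 : forall x, psA x *m phA x = 1%:M)
  (nA : forall x y, x <= y -> pmap G1 (i1 x) (i1 y) *m phA y = phA x *m pmap N x y)
  (eB1 : forall x, phB x *m psB x = 1%:M) (eB2 : forall x, psB x *m phB x = 1%:M)
  (nB : forall x y, x <= y -> pmap G2 (g2 x) (g2 y) *m phB y = phB x *m pmap N x y).

Definition th y := locked (phA y *m psB y).
Definition th' y := locked (phB y *m psA y).
Lemma th_th' y : th y *m th' y = 1%:M.
Proof. by rewrite /th /th' -!lock mulmxA -(mulmxA (phA y)) eB2 mulmx1 eA1. Qed.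
Lemma th'_th y : th' y *m th y = 1%:M.
Proof. by rewrite /th /th' -!lock mulmxA -(mulmxA (phB y)) eA2 mulmx1 eB1. Qed.
Lemma thN y y' : y <= y' ->
  pmap G1 (i1 y) (i1 y') *m th y' = th y *m pmap G2 (g2 y) (g2 y').
Proof.
move=> l; rewrite /th -!lock mulmxA nA // -!mulmxA.
by rewrite (nat_inv (eB2 y) (eB1 y') (nB l)).
Qed.
Lemma th'N y y' : y <= y' ->
  pmap G2 (g2 y) (g2 y') *m th' y' = th' y *m pmap G1 (i1 y) (i1 y').
Proof.
move=> l; rewrite /th' -!lock mulmxA nB // -!mulmxA.
by rewrite (nat_inv (eA2 y) (eA1 y') (nA l)).
Qed.

Definition S := (Q1 + Q2)%type.
Definition emb (u : S) : Q1 * Q2 :=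
  match u with inl a => (a, g2 (h1 a)) | inr b => (i1 (f2 b), b) end.
Definition emble (p q : Q1 * Q2) := (p.1 <= q.1) && (p.2 <= q.2).
Definition leS u v := emble (emb u) (emb v).
Lemma emble_trans : transitive emble.
Proof.
move=> q p r; rewrite /emble => /andP[a1 a2] /andP[b1 b2].
by rewrite (le_trans a1 b1) (le_trans a2 b2).
Qed.

Definition gdim (u : S) : nat :=
  match u with inl a => pdim G1 a | inr b => pdim G2 b end.
Definition gmap (u v : S) : 'M[k]_(gdim u, gdim v) :=
  match u as u0, v as v0 return 'M[k]_(gdim u0, gdim v0) with
  | inl a, inl a' => pmap G1 a a'
  | inr b, inr b' => pmap G2 b b'
  | inl a, inr b => pmap G1 a (i1 (h1 a)) *m th (h1 a) *m pmap G2 (g2 (h1 a)) b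
  | inr b, inl a => pmap G2 b (g2 (f2 b)) *m th' (f2 b) *m pmap G1 (i1 (f2 b)) a
  end.

Lemma gmap_id u : gmap u u = 1%:M.
Proof. by case: u => [a|b] /=; rewrite pmap_id. Qed.

Lemma gmap_comp u v w : leS u v -> leS v w -> gmap u w = gmap u v *m gmap v w.
Proof.
rewrite /leS /emble.
case: u => [a|b]; case: v => [a'|b']; case: w => [a''|b''] /=
  => /andP[l1 l2] /andP[l3 l4].
- exact: pmap_comp.
-
  have ua := GI_unit Hh1 a'.
  have hh : h1 a <= h1 a' by apply: GI_fmono Hh1 _ _ l1.
  rewrite !mulmxA -(pmap_comp G1 l1 ua).
  rewrite (pmap_comp G1 (GI_unit Hh1 a) (GI_gmono Hh1 hh)).
  rewrite -(mulmxA (pmap G1 a _) (pmap G1 _ _)) thN // !mulmxA -!mulmxA -(pmap_comp G2 _ l4) //.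
-
  have hle : h1 a <= f2 b' by rewrite (GI_adj Hh1).
  rewrite !mulmxA -(mulmxA _ (pmap G2 (g2 (h1 a)) b') (pmap G2 b' _)).
  rewrite -(pmap_comp G2 l2 (GI_unit Hf2 b')).
  rewrite -(mulmxA _ (th _) (pmap G2 _ _)) -thN // mulmxA.
  rewrite -(mulmxA _ (th _) (th' _)) th_th' mulmx1.
  rewrite -(pmap_comp G1 (GI_unit Hh1 a) (GI_gmono Hh1 hle)) -(pmap_comp G1 _ l3) //.
- by rewrite -[in RHS]mulmxA -(pmap_comp G2 l2 l4).
- by rewrite -[in RHS]mulmxA -(pmap_comp G1 l1 l3).
-
  have hle : f2 b <= h1 a' by rewrite (GI_adj Hf2).
  rewrite !mulmxA -(mulmxA _ (pmap G1 (i1 (f2 b)) a') (pmap G1 a' _)).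
  rewrite -(pmap_comp G1 l1 (GI_unit Hh1 a')).
  rewrite -(mulmxA _ (th' _) (pmap G1 _ _)) -th'N // mulmxA.
  rewrite -(mulmxA _ (th' _) (th _)) th'_th mulmx1.
  by rewrite -(pmap_comp G2 (GI_unit Hf2 b) (GI_gmono Hf2 hle)) -(pmap_comp G2 _ l4).
-
  have hf : f2 b <= f2 b' by apply: GI_fmono Hf2 _ _ l2.
  rewrite !mulmxA -(pmap_comp G2 l2 (GI_unit Hf2 b')).
  rewrite (pmap_comp G2 (GI_unit Hf2 b) (GI_gmono Hf2 hf)).
  rewrite -(mulmxA (pmap G2 b _) (pmap G2 _ _)) th'N // !mulmxA -!mulmxA -(pmap_comp G1 _ l3) //.
- exact: pmap_comp.
Qed.

Lemma emble_refl : reflexive emble.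
Proof. by move=> p; rewrite /emble !lexx. Qed.
Lemma leS_trans : transitive leS.
Proof. by move=> v u w; apply: emble_trans. Qed.

Lemma equiv_iso (j j' : P -> S) : (forall x, leS (j x) (j' x)) ->
  (forall x, leS (j' x) (j x)) -> (forall x y, x <= y -> leS (j x) (j y)) ->
  @diag_iso k d P (fun x => gdim (j x)) (fun x y => gmap (j x) (j y))
     (fun x => gdim (j' x)) (fun x y => gmap (j' x) (j' y)).
Proof.
move=> h1' h2' hm.
exists (fun x => gmap (j x) (j' x)), (fun x => gmap (j' x) (j x)); split.
- by move=> x; rewrite -gmap_comp // gmap_id.
- by move=> x; rewrite -gmap_comp // gmap_id.
- move=> x y lxy.
  have l1 : leS (j x) (j' y) by apply: leS_trans (hm _ _ lxy) (h1' y).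
  have l2 : leS (j' x) (j' y) by apply: leS_trans (h2' x) l1.
  by rewrite -(gmap_comp (hm _ _ lxy) (h1' y)) -(gmap_comp (h1' x) l2).
Qed.

Definition pr (p : Q1 * Q2) : bool := (p.2 == g2 (h1 p.1)) || (p.1 == i1 (f2 p.2)).
Definition QC := CQ pr.
Definition rep (p : QC) : S :=
  if (val p).2 == g2 (h1 (val p).1) then inl (val p).1 else inr (val p).2.
Lemma emb_rep p : emb (rep p) = val p.
Proof.
case: p => [[a b] /= pp]; rewrite /rep /=.
case: eqP => [-> //|ne]; move: pp; rewrite /pr /= => /orP[/eqP //|/eqP ->] //.
Qed.
Lemma le_rep (p q : QC) : (p <= q) = leS (rep p) (rep q).
Proof. by rewrite cqleE /leS !emb_rep. Qed.

Lemma pr_h p : pr p -> h1 p.1 = f2 p.2.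
Proof.
by case: p => a b; rewrite /pr /= => /orP[/eqP -> | /eqP ->]; rewrite ?(GI_fg Hf2) ?(GI_fg Hh1).
Qed.

Definition GC : pmod k QC :=
  @PMod k _ QC (fun p => gdim (rep p)) (fun p q => gmap (rep p) (rep q))
    (fun p => gmap_id (rep p))
    (fun p q r lpq lqr => gmap_comp (etrans (esym (le_rep p q)) lpq) (etrans (esym (le_rep q r)) lqr)).

Definition fC (p : QC) := f1 (val p).1.
Definition hC (p : QC) := h2 (val p).2.
Lemma pr_g x : pr (g1 x, g2 (h1 (g1 x))). Proof. by rewrite /pr /= eqxx. Qed.
Lemma pr_i z : pr (i1 (f2 (i2 z)), i2 z). Proof. by rewrite /pr /= eqxx orbT. Qed.
Definition gC x : QC := @exist _ (fun p => pr p) _ (pr_g x).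
Definition iC z : QC := @exist _ (fun p => pr p) _ (pr_i z).

Lemma GI_fC : galois_insertion fC gC.
Proof.
apply: GI_build => [[[a b] pp] x|x]; last by rewrite /fC /= (GI_fg Hf1).
rewrite cqleE /fC /= (GI_adj Hf1); split => [ha|/andP[] //].
rewrite ha /=; apply: le_trans (GI_unit Hf2 b) _.
rewrite -(pr_h pp) /= (GI_gle Hf2); apply: GI_fmono Hh1 _ _ ha.
Qed.

Lemma GI_hC : galois_insertion hC iC.
Proof.
apply: GI_build => [[[a b] pp] x|x]; last by rewrite /hC /= (GI_fg Hh2).
rewrite cqleE /hC /= (GI_adj Hh2); split => [hb|/andP[] //].
rewrite hb andbT; apply: le_trans (GI_unit Hh1 a) _.
rewrite (pr_h pp) /= (GI_gle Hh1); apply: GI_fmono Hf2 _ _ hb.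
Qed.

Lemma pull_gC (M : pmod k P) : pullback_iso g1 G1 M -> pullback_iso gC GC M.
Proof.
move=> hM; apply: diag_iso_trans hM.
apply: (@equiv_iso (fun x => rep (gC x)) (fun x => inl (g1 x))).
- by move=> x; rewrite /leS emb_rep emble_refl.
- by move=> x; rewrite /leS emb_rep emble_refl.
- by move=> x y lxy; rewrite -le_rep; apply: GI_gmono GI_fC _ _ lxy.
Qed.

Lemma pull_iC (L : pmod k P) : pullback_iso i2 G2 L -> pullback_iso iC GC L.
Proof.
move=> hL; apply: diag_iso_trans hL.
apply: (@equiv_iso (fun x => rep (iC x)) (fun x => inr (i2 x))).
- by move=> x; rewrite /leS emb_rep emble_refl.
- by move=> x; rewrite /leS emb_rep emble_refl.
- by move=> x y lxy; rewrite -le_rep; apply: GI_gmono GI_hC _ _ lxy.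
Qed.

End Comp.
Lemma min_attained (R : realType) (V : seq R) : forall (S : set R),
  (forall c, S c -> c \in V) -> (exists c, S c) ->
  exists2 c, S c & forall c', S c' -> c <= c'.
Proof.
elim: V => [|v V IH] S hV [c0 Sc0]; first by have := hV _ Sc0.
case: (pselect (exists c, S c /\ c != v)) => [[c1 [Sc1 nc1]]|nex]; last first.
  have Sv : S v.
    case: (eqVneq c0 v) => [<- //|ne]; by exfalso; apply: nex; exists c0.
  exists v => // c' Sc'; case: (eqVneq c' v) => [-> //|ne].
  by exfalso; apply: nex; exists c'.
have [m [Sm _] hm] : exists2 m, (fun c => S c /\ c != v) m &
    forall c', (fun c => S c /\ c != v) c' -> m <= c'.
  apply: IH; last by exists c1.
  move=> c [Sc nc]; have := hV _ Sc; rewrite inE (negbTE nc) //.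
case: (pselect (S v)) => [Sv|nSv].
  case: (leP v m) => [lvm|lmv].
    exists v => // c' Sc'; case: (eqVneq c' v) => [-> //|ne].
    by apply: le_trans lvm (hm _ (conj Sc' ne)).
  exists m => // c' Sc'; case: (eqVneq c' v) => [-> |ne]; first exact: ltW.
  exact: hm.
exists m => // c' Sc'; case: (eqVneq c' v) => [ev|ne]; last exact: hm.
by exfalso; apply: nSv; rewrite -ev.
Qed.

Section Main.
Context (R : realType) (k : fieldType) (d : Order.disp_t) (P : finPOrderType d)
  (dP : P -> P -> R) (hdP : is_metric dP).

Lemma dP_ge0 x y : 0 <= dP x y. Proof. by case: hdP. Qed.
Lemma dP_eq0 x y : dP x y = 0 <-> x = y. Proof. by case: hdP. Qed.
Lemma dP_sym x y : dP x y = dP y x. Proof. by case: hdP. Qed.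
Lemma dP_tri x y z : dP x z <= dP x y + dP y z. Proof. by case: hdP. Qed.

Lemma cost_ge0 dQ (Q : finPOrderType dQ) (f h : Q -> P) : 0 <= coupling_cost dP f h.
Proof.
rewrite /coupling_cost; elim/big_ind: _ => // [x y hx hy|q _]; last exact: dP_ge0.
by rewrite le_max hx.
Qed.

Lemma cost_le dQ (Q : finPOrderType dQ) (f h : Q -> P) q :
  dP (f q) (h q) <= coupling_cost dP f h.
Proof. exact: le_bigmax. Qed.

Definition Vals : seq R := 0 :: [seq dP p.1 p.2 | p <- enum {: P * P}].

Lemma cost_in dQ (Q : finPOrderType dQ) (f h : Q -> P) : coupling_cost dP f h \in Vals.
Proof.
rewrite /coupling_cost; elim/big_ind: _ => [|x y hx hy|q _].
- by rewrite inE eqxx.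
- by rewrite maxElt; case: ifP.
- rewrite inE; apply/orP; right; apply/mapP; exists (f q, h q) => //.
  by rewrite mem_enum.
Qed.

Lemma CS_ge0 (M N : pmod k P) c : coupling_cost_of dP M N c -> 0 <= c.
Proof. by case=> dQ [Q [f [g [h [i [G [_ _ _ _ ->]]]]]]]; apply: cost_ge0. Qed.

Lemma CS_in (M N : pmod k P) c : coupling_cost_of dP M N c -> c \in Vals.
Proof. by case=> dQ [Q [f [g [h [i [G [_ _ _ _ ->]]]]]]]; apply: cost_in. Qed.

Lemma dGT_empty (M N : pmod k P) : ~ (exists c, coupling_cost_of dP M N c) ->
  dGT dP M N = +oo%E.
Proof.
move=> ne; apply/ereal_inf_pinfty => _ [c hc <-].
by exfalso; apply: ne; exists c.
Qed.

Lemma dGT_min (M N : pmod k P) : (exists c, coupling_cost_of dP M N c) ->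
  exists2 c, coupling_cost_of dP M N c & dGT dP M N = c%:E.
Proof.
move=> ex; have [c hc hmin] := @min_attained R Vals (coupling_cost_of dP M N) (@CS_in M N) ex.
exists c => //; apply/le_anti/andP; split.
  by apply: ereal_inf_lbound; exists c.
by apply: le_ereal_inf_tmp => _ [c' hc' <-]; rewrite lee_fin; apply: hmin.
Qed.

Lemma dGT_ge0 (M N : pmod k P) : (0 <= dGT dP M N)%E.
Proof. by apply: le_ereal_inf_tmp => _ [c hc <-]; rewrite lee_fin; apply: CS_ge0 hc. Qed.


Lemma CS_comp (M N L : pmod k P) c1 c2 :
  coupling_cost_of dP M N c1 -> coupling_cost_of dP N L c2 ->
  exists2 c, coupling_cost_of dP M L c & c <= c1 + c2.
Proof.
case=> dQ1 [Q1 [f1 [g1 [h1 [i1 [G1 [Hf1 Hh1 hM hN1 ->]]]]]]].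
case=> dQ2 [Q2 [f2 [g2 [h2 [i2 [G2 [Hf2 Hh2 hN2 hL ->]]]]]]].
case: (hN1) => phA [psA [eA1 eA2 nA]]; case: (hN2) => phB [psB [eB1 eB2 nB]].
exists (coupling_cost dP (fC f1 (h1:=h1) (i1:=i1) (f2:=f2) (g2:=g2))
                         (hC (h1:=h1) (i1:=i1) (f2:=f2) h2 (g2:=g2))).
  exists cq_display, (QC h1 i1 f2 g2), (fC f1 (h1:=h1) (i1:=i1) (f2:=f2) (g2:=g2)),
    (gC h1 g1 i1 f2 g2), (hC (h1:=h1) (i1:=i1) (f2:=f2) h2 (g2:=g2)),
    (iC h1 i1 f2 g2 i2), (GC Hh1 Hf2 eA1 eA2 nA eB1 eB2 nB).
  refine (And5 _ _ _ _ _) => //.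
  - exact: GI_fC.
  - exact: GI_hC.
  - exact: (pull_gC Hf1 Hh1 Hf2 eA1 eA2 nA eB1 eB2 nB hM).
  - exact: (pull_iC Hh1 Hf2 Hh2 eA1 eA2 nA eB1 eB2 nB hL).
apply: bigmax_le; first by apply: addr_ge0; apply: cost_ge0.
move=> [[a b] pp] _; rewrite /fC /hC /=.
apply: le_trans (dP_tri _ (h1 a) _) _.
apply: lerD; first exact: (cost_le f1 h1 a).
by rewrite (pr_h Hh1 Hf2 pp); apply: (cost_le f2 h2 b).
Qed.


Lemma CS_sym (M N : pmod k P) c : coupling_cost_of dP M N c -> coupling_cost_of dP N M c.
Proof.
case=> dQ [Q [f [g [h [i [G [Hf Hh hM hN ->]]]]]]].
exists dQ, Q, h, i, f, g, G; refine (And5 Hh Hf hN hM _).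
by rewrite /coupling_cost; apply: eq_bigr => q _; rewrite dP_sym.
Qed.

Lemma CS_iso (M M' N N' : pmod k P) c : pmod_iso M M' -> pmod_iso N N' ->
  coupling_cost_of dP M N c -> coupling_cost_of dP M' N' c.
Proof.
move=> iM iN; case=> dQ [Q [f [g [h [i [G [Hf Hh hM hN ->]]]]]]].
exists dQ, Q, f, g, h, i, G; refine (And5 Hf Hh _ _ erefl).
- exact: diag_iso_trans hM iM.
- exact: diag_iso_trans hN iN.
Qed.

Lemma CS_refl (M : pmod k P) : coupling_cost_of dP M M 0.
Proof.
exists d, P, id, id, id, id, M; refine (And5 _ _ _ _ _).
- by apply: GI_build.
- by apply: GI_build.
- exact: diag_iso_refl.
- exact: diag_iso_refl.
rewrite /coupling_cost; elim/big_ind: _ => // [x y <- <-|q _].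
  by rewrite maxxx.
by apply/esym/dP_eq0.
Qed.

Lemma CS0_iso (M N : pmod k P) : coupling_cost_of dP M N 0 -> pmod_iso M N.
Proof.
case=> dQ [Q [f [g [h [i [G [Hf Hh hM hN e]]]]]]].
have fh q : f q = h q.
  apply/dP_eq0/le_anti; rewrite dP_ge0 andbT e; exact: cost_le.
have gi : g = i.
  apply: funext => x; apply/le_anti/andP; split.
    by rewrite -(GI_adj Hh) -fh (GI_fg Hf).
  by rewrite -(GI_adj Hf) fh (GI_fg Hh).
subst i; exact: diag_iso_trans (diag_iso_sym hM) hN.
Qed.

Lemma dGT0 (M N : pmod k P) : dGT dP M N = 0%E -> pmod_iso M N.
Proof.
move=> h0; case: (pselect (exists c, coupling_cost_of dP M N c)) => [ex|nex].
  have [c hc e] := dGT_min ex; move: h0; rewrite e => -[c0].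
  by apply: CS0_iso; rewrite -c0.
by move: h0; rewrite dGT_empty.
Qed.

End Main.

Theorem corollary3p7 (R : realType) (k : fieldType) (d : Order.disp_t)
  (P : finPOrderType d) (dP : P -> P -> R) (hdP : is_metric dP) :
  (forall M N : pmod k P, dGT dP M N = 0%E -> pmod_iso M N) /\
  ext_metric_on_iso_classes (dGT (k:=k) dP).
Proof.
split; first exact: dGT0.
split.
- move=> M M' N N' iM iN.
  have E : coupling_cost_of dP M N = coupling_cost_of dP M' N'.
    apply: funext => c; apply: propext; split; first exact: CS_iso.
    by apply: CS_iso; apply: diag_iso_sym.
  by rewrite /dGT E.
- move=> M N; exact: dGT_ge0.
- move=> M N; split; first exact: dGT0.
  move=> iMN; apply/le_anti; rewrite (dGT_ge0 hdP) andbT.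
  apply: ge_ereal_inf; exists 0%E => //; exists 0 => //.
  exact: (CS_iso (diag_iso_refl _) iMN (CS_refl hdP M)).
- move=> M N.
  have E : coupling_cost_of dP M N = coupling_cost_of dP N M.
    by apply: funext => c; apply: propext; split; apply: CS_sym.
  by rewrite /dGT E.
- move=> M N L.
  case: (pselect (exists c, coupling_cost_of dP M N c)) => [ex1|nex1]; last first.
    rewrite (dGT_empty nex1) addye ?leey //.
    by move: (dGT_ge0 hdP N L); case: (dGT dP N L).
  case: (pselect (exists c, coupling_cost_of dP N L c)) => [ex2|nex2]; last first.
    rewrite (dGT_empty nex2) addey ?leey //.
    by move: (dGT_ge0 hdP M N); case: (dGT dP M N).
  have [c1 h1 ->] := dGT_min ex1; have [c2 h2 ->] := dGT_min ex2.
  have [c h3 hc] := CS_comp hdP h1 h2.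
  by apply: ge_ereal_inf; exists c%:E; [exists c | rewrite -EFinD lee_fin].
Qed.
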